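(* Let $L>0$ be fixed and let the constant renormalized force be $F=cN^{\gamma}$ with $c>0$, $\gamma>1$. Then the normalized counting measures of the fixed points, $\mu_N=\frac1N\sum_{i=0}^{N}\delta_{x_i}$ (Dirac masses at the particle positions), converge as $N\to\infty$ in the sense of distributions (weakly) to the Dirac delta measure at $0$.
   Context: A configuration consists of $N+1$ point particles $-L\le x_N<\dots<x_1<x_0\le 0$ on $[-L,0]$ with potential energy $U=\sum_{i=1}^{N}\frac{\alpha_{int}}{x_{i-1}-x_i}-\sum_{i=0}^{N}\int_{-L}^{x_i}\alpha_{ext}F_0\,dx$, $\alpha_{int},\alpha_{ext}>0$, with constant $F_0>0$; the renormalized force is the constant $F=\frac{\alpha_{ext}}{\alpha_{int}}F_0$, which may depend on $N$ (the external force pushes particles towards $0$). Write $\delta_k=x_{k-1}-x_k$, $f_k=\delta_k^{-2}$. The walls at $0,-L$ are completely inelastic. A fixed point is a configuration with $x_0=0$, $f_{k+1}+F=f_k$ for $k=1,\dots,N-1$, and either $x_N=-L$ with $f_N\ge F$, or $x_N>-L$ with $f_N=F$; it exists and is unique. *)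

(* Defs.v *)
From Stdlib Require Import Reals Lra Lia.
Open Scope R_scope.

Definition gap (x : nat -> R) (k : nat) : R := x (k - 1)%nat - x k.
Definition fcoef (x : nat -> R) (k : nat) : R := / (gap x k ^ 2).

(* x : nat -> R gives positions x_0, ..., x_N (values beyond N irrelevant).
   Fixed point with N+1 particles on [-L,0], renormalized force F. *)
Definition is_fixed_point (L F : R) (N : nat) (x : nat -> R) : Prop :=
  x 0%nat = 0 /\
  (forall k : nat, (k < N)%nat -> x (S k) < x k) /\
  -L <= x N /\
  (forall k : nat, (1 <= k)%nat -> (k <= N - 1)%nat ->
      fcoef x (S k) + F = fcoef x k) /\
  ((x N = -L /\ fcoef x N >= F) \/ (-L < x N /\ fcoef x N = F)).

Definition emp_measure (N : nat) (x : nat -> R) (phi : R -> R) : R :=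
  / INR N * sum_f_R0 (fun i => phi (x i)) N.

(* Main.v *)
Require Import Defs.
From Stdlib Require Import Reals Lra Lia Psatz.
Open Scope R_scope.

Lemma fcoef_lb L F N p : is_fixed_point L F N p ->
  forall m, (m < N)%nat -> fcoef p (N - m) >= F * INR (S m).
Proof.
  intros [H0 [Hdec [HL [Hrec Hend]]]] m.
  induction m as [|m IH]; intros Hm.
  - replace (N - 0)%nat with N by lia. simpl INR. destruct Hend as [[_ H]|[_ H]]; lra.
  - assert (Hk := Hrec (N - S m)%nat ltac:(lia) ltac:(lia)).
    replace (S (N - S m)) with (N - m)%nat in Hk by lia.
    specialize (IH ltac:(lia)).
    rewrite S_INR. lra.
Qed.

Lemma step_ineq m : 1 <= m -> / sqrt m <= 2 * (sqrt m - sqrt (m - 1)).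
Proof.
  intros Hm.
  assert (Ha : 0 < sqrt m) by (apply sqrt_lt_R0; lra).
  assert (Hb : 0 <= sqrt (m - 1)) by apply sqrt_pos.
  assert (Ha2 : sqrt m * sqrt m = m) by (apply sqrt_sqrt; lra).
  assert (Hb2 : sqrt (m-1) * sqrt (m-1) = m - 1) by (apply sqrt_sqrt; lra).
  assert (H1 : 1 <= 2 * sqrt m * (sqrt m - sqrt (m - 1))).
  { nra. }
  apply (Rmult_le_reg_l (sqrt m)); auto.
  rewrite Rinv_r; lra.
Qed.

Lemma pos_bound L F N p : is_fixed_point L F N p -> 0 < F ->
  forall i, (i <= N)%nat ->
    0 <= - p i <= 2 / sqrt F * (sqrt (INR N) - sqrt (INR (N - i))).
Proof.
  intros Hfp HF. pose proof Hfp as [H0 [Hdec _]].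
  assert (Hs : 0 < sqrt F) by (apply sqrt_lt_R0; lra).
  induction i as [|i IH]; intros Hi.
  - rewrite H0. replace (N - 0)%nat with N by lia. lra.
  - specialize (IH ltac:(lia)).
    assert (Hfc := fcoef_lb L F N p Hfp (N - S i)%nat ltac:(lia)).
    replace (N - (N - S i))%nat with (S i) in Hfc by lia.
    replace (S (N - S i)) with (N - i)%nat in Hfc by lia.
    assert (Hd := Hdec i ltac:(lia)).
    unfold fcoef, gap in Hfc. replace (S i - 1)%nat with i in Hfc by lia.
    set (g := p i - p (S i)) in *.
    set (m := INR (N - i)) in *.
    assert (Hm1 : 1 <= m).
    { unfold m. replace (N - i)%nat with (S (N - S i)) by lia. rewrite S_INR.
      pose proof (pos_INR (N - S i)). lra. }
    assert (Hmm : INR (N - S i) = m - 1).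
    { unfold m. replace (N - i)%nat with (S (N - S i)) by lia. rewrite S_INR. lra. }
    rewrite Hmm.
    assert (Hg : 0 < g) by (unfold g; lra).
    assert (Hgg : g * g * (F * m) <= 1).
    { assert (0 < g^2) by (apply pow_lt; lra).
      apply Rge_le in Hfc.
      apply (Rmult_le_compat_l (g^2)) in Hfc; [|lra].
      rewrite Rinv_r in Hfc; [|lra]. simpl in Hfc. nra. }
    assert (Ha : 0 < sqrt m) by (apply sqrt_lt_R0; lra).
    assert (Ha2 : sqrt m * sqrt m = m) by (apply sqrt_sqrt; lra).
    assert (Hs2 : sqrt F * sqrt F = F) by (apply sqrt_sqrt; lra).
    assert (Hgsa : g * sqrt F * sqrt m <= 1).
    { assert (0 < g * sqrt F * sqrt m) by (repeat apply Rmult_lt_0_compat; lra).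
      nra. }
    pose proof (step_ineq m Hm1) as Hst.
    assert (Hgs : g * sqrt F <= 2 * (sqrt m - sqrt (m - 1))).
    { apply (Rmult_le_reg_r (sqrt m)); auto.
      apply (Rmult_le_compat_r (sqrt m)) in Hst; [|lra].
      rewrite Rinv_l in Hst; lra. }
    assert (Hg2 : g <= 2 / sqrt F * (sqrt m - sqrt (m - 1))).
    { unfold Rdiv. apply (Rmult_le_reg_l (sqrt F)); auto.
      replace (sqrt F * (2 * / sqrt F * (sqrt m - sqrt (m - 1))))
        with (2 * (sqrt m - sqrt (m - 1))) by (field; lra). lra. }
    unfold g in Hg2. split; lra.
Qed.

Lemma abs_bound L F N p : is_fixed_point L F N p -> 0 < F ->
  forall i, (i <= N)%nat -> Rabs (p i) <= 2 / sqrt F * sqrt (INR N).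
Proof.
  intros Hfp HF i Hi. destruct (pos_bound L F N p Hfp HF i Hi) as [A B].
  assert (0 <= sqrt (INR (N - i))) by apply sqrt_pos.
  assert (0 < sqrt F) by (apply sqrt_lt_R0; lra).
  assert (0 <= 2 / sqrt F) by (unfold Rdiv; apply Rmult_le_pos; [lra| left; apply Rinv_0_lt_compat; lra]).
  rewrite Rabs_left1 by lra. nra.
Qed.

Lemma rpow_split (N : nat) gamma : (1 <= N)%nat ->
  Rpower (INR N) gamma = INR N * Rpower (INR N) (gamma - 1).
Proof.
  intros H. assert (0 < INR N) by (apply lt_0_INR; lia).
  replace gamma with (1 + (gamma - 1)) at 1 by ring.
  rewrite Rpower_plus, Rpower_1; auto.
Qed.

Lemma small_eventually c gamma d : 0 < c -> 1 < gamma -> 0 < d ->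
  exists N0 : nat, forall N, (N0 <= N)%nat -> (1 <= N)%nat ->
    4 * INR N / (c * Rpower (INR N) gamma) < d.
Proof.
  intros Hc Hg Hd.
  set (K := 4 / (c * d) + 1).
  assert (HK : 0 < K).
  { unfold K. assert (0 < 4 / (c * d)) by (unfold Rdiv; apply Rmult_lt_0_compat; [lra|apply Rinv_0_lt_compat; nra]). lra. }
  set (B := Rpower K (/ (gamma - 1))).
  assert (HB : 0 < B) by (unfold B, Rpower; apply exp_pos).
  destruct (INR_unbounded B) as [N0 HN0].
  exists N0. intros N HN H1.
  assert (HNp : 0 < INR N) by (apply lt_0_INR; lia).
  assert (HBN : B <= INR N) by (apply le_INR in HN; lra).
  assert (HP : K <= Rpower (INR N) (gamma - 1)).
  { replace K with (Rpower B (gamma - 1)).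
    - apply Rle_Rpower_l; lra.
    - unfold B. rewrite Rpower_mult. replace (/ (gamma - 1) * (gamma - 1)) with 1 by (field; lra).
      apply Rpower_1; auto. }
  rewrite rpow_split by auto.
  set (P := Rpower (INR N) (gamma - 1)) in *.
  replace (4 * INR N / (c * (INR N * P))) with (4 / (c * P)) by (field; lra).
  assert (Hk : 4 / (c * d) < P) by (unfold K in HK, HP; lra).
  assert (0 < c * P) by nra.
  apply (Rmult_lt_reg_r (c * P)); auto.
  unfold Rdiv. rewrite Rmult_assoc, Rinv_l by lra.
  apply (Rmult_lt_compat_l (c * d)) in Hk; [|nra].
  replace (c * d * (4 / (c * d))) with 4 in Hk by (field; split; lra). nra.
Qed.

Theorem theorem2 :
  forall (L c gamma : R), 0 < L -> 0 < c -> 1 < gamma ->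
  forall (x : nat -> nat -> R),
    (forall N : nat, (1 <= N)%nat ->
       is_fixed_point L (c * Rpower (INR N) gamma) N (x N)) ->
  forall phi : R -> R,
    continuity phi ->
    (exists M : R, forall t : R, Rabs (phi t) <= M) ->
    Un_cv (fun N : nat => emp_measure N (x N) phi) (phi 0).
Proof.
  intros L c gamma HL Hc Hg x Hfp phi Hcont _ eps Heps.
  destruct (Hcont 0 (eps / 3) ltac:(lra)) as [del [Hdel Hd]].
  destruct (small_eventually c gamma (del * del) Hc Hg ltac:(nra)) as [N0 HN0].
  destruct (INR_unbounded (3 * Rabs (phi 0) / eps)) as [N1 HN1].
  exists (S (N0 + N1)). intros N HN. unfold R_dist, emp_measure.
  assert (H1 : (1 <= N)%nat) by lia.
  set (F := c * Rpower (INR N) gamma).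
  assert (HF : 0 < F) by (unfold F, Rpower; apply Rmult_lt_0_compat; [lra|apply exp_pos]).
  assert (HNp : 1 <= INR N) by (apply (le_INR 1); lia).
  assert (HN1' : 3 * Rabs (phi 0) / eps < INR N) by (apply le_INR in HN; rewrite S_INR, plus_INR in HN; pose proof (pos_INR N0); lra).
  assert (Hpt : forall i, (i <= N)%nat -> Rabs (phi (x N i) - phi 0) < eps / 3).
  { intros i Hi.
    destruct (Req_dec (x N i) 0) as [E|E]. { rewrite E. unfold Rminus. rewrite Rplus_opp_r, Rabs_R0. lra. }
    apply Hd. split. { unfold D_x, no_cond. split; auto. }
    simpl. unfold R_dist. rewrite Rminus_0_r.
    pose proof (abs_bound L F N (x N) (Hfp N H1) HF i Hi) as Hab.
    assert (Hsm := HN0 N ltac:(lia) H1). fold F in Hsm.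
    set (X := 2 / sqrt F * sqrt (INR N)) in *.
    assert (Hs : 0 < sqrt F) by (apply sqrt_lt_R0; lra).
    assert (HX2 : X * X = 4 * INR N / F).
    { unfold X. replace (2 / sqrt F * sqrt (INR N) * (2 / sqrt F * sqrt (INR N)))
        with (4 * (sqrt (INR N) * sqrt (INR N)) / (sqrt F * sqrt F)) by (field; lra).
      rewrite !sqrt_sqrt; lra. }
    assert (0 <= X).
    { unfold X. apply Rmult_le_pos; [|apply sqrt_pos]. unfold Rdiv. apply Rmult_le_pos; [lra|left; apply Rinv_0_lt_compat; lra]. }
    rewrite <- HX2 in Hsm. assert (X < del) by nra. lra. }
  set (s := sum_f_R0 (fun i => phi (x N i)) N).
  assert (Hdiff : s - INR (S N) * phi 0 = sum_f_R0 (fun i => phi (x N i) - phi 0) N).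
  { rewrite minus_sum, sum_cte. unfold s. ring. }
  assert (Hsb : Rabs (sum_f_R0 (fun i => phi (x N i) - phi 0) N) <= INR (S N) * (eps / 3)).
  { eapply Rle_trans. apply sum_f_R0_triangle.
    eapply Rle_trans. apply (sum_Rle _ (fun _ => eps / 3)). intros n Hn. left. apply Hpt; auto.
    rewrite sum_cte. lra. }
  rewrite <- Hdiff in Hsb. rewrite S_INR in Hsb.
  replace (/ INR N * s - phi 0) with (/ INR N * (s - (INR N + 1) * phi 0) + phi 0 / INR N) by (field; lra).
  eapply Rle_lt_trans. apply Rabs_triang.
  rewrite Rabs_mult, Rabs_inv, (Rabs_right (INR N)) by lra.
  unfold Rdiv. rewrite Rabs_mult, Rabs_inv, (Rabs_right (INR N)) by lra.
  assert (Ha : / INR N * Rabs (s - (INR N + 1) * phi 0) <= 2 * (eps / 3)).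
  { apply (Rmult_le_reg_l (INR N)); [lra|]. rewrite <- Rmult_assoc, Rinv_r by lra. nra. }
  assert (Hb : Rabs (phi 0) * / INR N < eps / 3).
  { apply (Rmult_lt_reg_l (INR N)); [lra|].
    replace (INR N * (Rabs (phi 0) * / INR N)) with (Rabs (phi 0)) by (field; lra).
    unfold Rdiv in HN1'. apply (Rmult_lt_compat_r (eps/3)) in HN1'; [|lra].
    replace (3 * Rabs (phi 0) * / eps * (eps / 3)) with (Rabs (phi 0)) in HN1' by (field; lra). lra. }
  lra.
Qed.
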